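(* Let $Q_t(x)=1+t(e^x-1)$. For every integer $k\geq1$, the coefficient of $x^{k-1}$ in the formal power series $Q_t'(x)/Q_t(x)$ (equivalently $\frac{1}{2\pi\sqrt{-1}}\oint\frac{Q_t'(x)}{x^kQ_t(x)}dx$) equals $$t\sum_{i=0}^{k-1}\frac{S(k,k-i)}{\binom{k-1}{i}\cdot i!}(-t)^{k-1-i}.$$
   Context: $S(n,m)$ is the Stirling number of the second kind (number of partitions of $\{1,\ldots,n\}$ into exactly $m$ nonempty blocks), with $S(n,m)=0$ for $m>n$, $S(n,0)=0$ for $n>0$, $S(0,0)=1$. *)

(* Defs.v *)
From HB Require Import structures.
From mathcomp Require Import all_boot all_order all_algebra.
Set Implicit Arguments. Unset Strict Implicit. Unset Printing Implicit Defensive.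
Import Order.TTheory GRing.Theory Num.Theory.
Local Open Scope ring_scope.

(* Stirling numbers of the second kind, combinatorially: the number of
   partitions of {0,..,n-1} into exactly m nonempty blocks.
   (mathcomp's [partition P D] requires set0 \notin P.) *)
Definition stirling2 (n m : nat) : nat :=
  #|[set P : {set {set 'I_n}} | partition P [set: 'I_n] && (#|P| == m)]|.

Definition fps (R : nzRingType) := nat -> R.

Definition fps_one (R : nzRingType) : fps R := fun n => (n == 0%N)%:R.
Definition fps_add (R : nzRingType) (f g : fps R) : fps R := fun n => f n + g n.
Definition fps_opp (R : nzRingType) (f : fps R) : fps R := fun n => - f n.
Definition fps_scale (R : nzRingType) (c : R) (f : fps R) : fps R :=
  fun n => c * f n.
Definition fps_mul (R : nzRingType) (f g : fps R) : fps R :=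
  fun n => \sum_(j < n.+1) f j * g (n - j)%N.
Definition fps_deriv (R : nzRingType) (f : fps R) : fps R :=
  fun n => n.+1%:R * f n.+1.
Definition fps_exp (R : unitRingType) : fps R := fun n => (n`!%:R)^-1.

Definition Qt (R : unitRingType) (t : R) : fps R :=
  fps_add (fps_one R) (fps_scale t (fps_add (fps_exp R) (fps_opp (fps_one R)))).

(* h is the formal quotient f / g, i.e. g * h = f coefficientwise.
   When g 0 is invertible (as for Q_t, whose constant term is 1) such h
   exists and is unique. *)
Definition fps_quotient (R : nzRingType) (f g h : fps R) : Prop :=
  forall n, fps_mul g h n = f n.

(* Main.v *)
Require Import Defs.
From HB Require Import structures.
From mathcomp Require Import all_boot all_order all_algebra.
From mathcomp Require Import ring zify.
Set Implicit Arguments. Unset Strict Implicit. Unset Printing Implicit Defensive.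
Lemma partTP (T : finType) (P : {set {set T}}) :
  partition P [set: T] <->
  [/\ set0 \notin P, forall x, exists2 A, A \in P & x \in A &
      forall A B x, A \in P -> B \in P -> x \in A -> x \in B -> A = B].
Proof.
split.
  case/and3P => /eqP cov /trivIsetP triv s0; split => //.
    move=> x; have : x \in cover P by rewrite cov inE.
    by case/bigcupP => A AP xA; exists A.
  move=> A B x AP BP xA xB; apply/eqP; apply/negPn/negP => nAB.
  by move: (disjointFr (triv A B AP BP nAB) xA); rewrite xB.
case=> s0 cov uniq; apply/and3P; split => //.
  apply/eqP/setP => x; rewrite inE; case: (cov x) => A AP xA.
  by apply/bigcupP; exists A.
apply/trivIsetP => A B AP BP nAB; rewrite -setI_eq0; apply/eqP/setP => x.
rewrite !inE; apply/negP => /andP [xA xB].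
by move/eqP: nAB; apply; apply: (uniq A B x).
Qed.

Lemma bij_card (T1 T2 : finType) (D : {set T1}) (E : {set T2}) f g :
  {in D, forall x, f x \in E} -> {in E, forall y, g y \in D} ->
  {in D, cancel f g} -> {in E, cancel g f} -> #|D| = #|E|.
Proof.
move=> fDE gED fK gK; apply/eqP; rewrite eqn_leq; apply/andP; split.
  rewrite -(card_in_imset (can_in_inj fK)); apply: subset_leq_card.
  by apply/subsetP => y /imsetP [x xD ->]; apply: fDE.
rewrite -(card_in_imset (can_in_inj gK)); apply: subset_leq_card.
by apply/subsetP => y /imsetP [x xD ->]; apply: gED.
Qed.
Definition Sset n m := [set P : {set {set 'I_n}} | partition P [set: 'I_n] && (#|P| == m)].

Section Rec.
Variable n : nat.
Local Notation x0 := (@ord_max n).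
Definition ww : 'I_n -> 'I_n.+1 := lift ord_max.
Definition ext (B : {set 'I_n}) : {set 'I_n.+1} := ww @: B.
Definition res (A : {set 'I_n.+1}) : {set 'I_n} := ww @^-1: A.

Lemma ww_inj : injective ww. Proof. exact: lift_inj. Qed.
Lemma ww_neq i : (ww i == x0) = false.
Proof. by rewrite eq_sym; apply/negbTE/neq_lift. Qed.
Lemma memext B i : (ww i \in ext B) = (i \in B).
Proof. exact: (mem_imset _ _ ww_inj). Qed.
Lemma x0ext B : x0 \notin ext B.
Proof. by apply/imsetP => -[i _ /eqP]; rewrite eq_sym ww_neq. Qed.
Lemma memres A i : (i \in res A) = (ww i \in A).
Proof. by rewrite inE. Qed.
Lemma resext B : res (ext B) = B.
Proof. by apply/setP => i; rewrite memres memext. Qed.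
Lemma ext_inj : injective ext.
Proof. exact: (imset_inj ww_inj). Qed.
Lemma caseI (y : 'I_n.+1) : y = x0 \/ exists i, y = ww i.
Proof. by case: (unliftP x0 y) => [j ->|->]; [right; exists j|left]. Qed.
Lemma extres A : ext (res A) = A :\ x0.
Proof.
apply/setP => y; case: (caseI y) => [->|[i ->]].
  by rewrite (negbTE (x0ext _)) !inE eqxx.
by rewrite memext memres in_setD1 ww_neq.
Qed.
Lemma ext0 B : ext B = set0 -> B = set0.
Proof. by move=> e; rewrite -(resext B) e; apply/setP => i; rewrite memres !inE. Qed.
Lemma nonx0 (A : {set 'I_n.+1}) : A != set0 -> A != [set x0] -> exists i, ww i \in A.
Proof.
case/set0Pn => y yA nA; case: (caseI y) yA => [->|[i ->]] yA; last by exists i.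
case: (boolP [exists i, ww i \in A]) => [/existsP//|/existsPn nw].
case/eqP: nA; apply/setP => z; rewrite inE; case: (caseI z) => [->|[i ->]].
  by rewrite yA eqxx.
by rewrite ww_neq (negbTE (nw i)).
Qed.

Definition f1 (Q : {set {set 'I_n}}) : {set {set 'I_n.+1}} := [set x0] |: (ext @: Q).
Definition g1 (P : {set {set 'I_n.+1}}) : {set {set 'I_n}} := res @: (P :\ [set x0]).
Definition B1 := [set P : {set {set 'I_n.+1}} | [set x0] \in P].

Lemma x0notext (Q : {set {set 'I_n}}) : [set x0] \notin ext @: Q.
Proof.
apply/imsetP => -[B _ e]; have := x0ext B; rewrite -e.
by rewrite inE eqxx.
Qed.

Lemma f1_ok m Q : Q \in Sset n m -> f1 Q \in Sset n.+1 m.+1 :&: B1.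
Proof.
rewrite inE => /andP [/partTP [s0 cov uq] /eqP cQ].
rewrite in_setI /B1 [in X in _ && X]inE /f1 setU11 andbT inE cardsU1 x0notext card_imset ?cQ; last exact: ext_inj.
rewrite eqxx andbT; apply/partTP; split.
- rewrite !inE negb_or; apply/andP; split.
    by apply/eqP => /setP /(_ x0); rewrite !inE eqxx.
  by apply/imsetP => -[B BQ /esym /ext0 B0]; move: s0; rewrite -B0 BQ.
- move=> y; case: (caseI y) => [->|[i ->]].
    by exists [set x0]; rewrite !inE eqxx.
  case: (cov i) => A AQ iA; exists (ext A); last by rewrite memext.
  by rewrite inE imset_f ?orbT.
- move=> A B y; rewrite !inE => /orP [/eqP ->|/imsetP [A' A'Q ->]]
     /orP [/eqP ->|/imsetP [B' B'Q ->]] //.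
  + by rewrite inE => /eqP -> ; rewrite (negbTE (x0ext _)).
  + by move=> /imsetP [i _ ->]; rewrite inE ww_neq.
  + move=> /imsetP [i iA ->]; rewrite memext => iB.
    by rewrite (uq A' B' i).
Qed.

Lemma partx0 (P : {set {set 'I_n.+1}}) A :
  partition P [set: 'I_n.+1] -> A \in P -> [set x0] \in P -> A != [set x0] -> x0 \notin A.
Proof.
move=> /partTP [_ _ uq] AP x0P nA; apply/negP => xA.
by case/eqP: nA; apply: (uq _ _ x0) => //; rewrite inE.
Qed.

Lemma res_inj_gen (P : {set {set 'I_n.+1}}) A B :
  partition P [set: 'I_n.+1] -> A \in P -> B \in P -> A != [set x0] ->
  res A = res B -> A = B.
Proof.
move=> /partTP [s0 _ uq] AP BP nA e.
have nA0 : A != set0 by apply: contraNneq s0 => <-.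
have [i iA] := nonx0 nA0 nA.
by apply: (uq _ _ (ww i)) => //; rewrite -memres -e memres.
Qed.

Lemma res_ne0 (P : {set {set 'I_n.+1}}) A :
  partition P [set: 'I_n.+1] -> A \in P -> A != [set x0] -> res A != set0.
Proof.
move=> /partTP [s0 _ uq] AP nA.
have nA0 : A != set0 by apply: contraNneq s0 => <-.
have [i iA] := nonx0 nA0 nA.
by apply/set0Pn; exists i; rewrite memres.
Qed.

Lemma g1_ok m P : P \in Sset n.+1 m.+1 :&: B1 -> g1 P \in Sset n m.
Proof.
rewrite in_setI /B1 [in X in _ && X]inE inE => /andP [/andP [pP /eqP cP] x0P].
have inj : {in P :\ [set x0] &, injective res}.
  move=> A B; rewrite !in_setD1 => /andP [nA AP] /andP [_ BP].
  move=> e; exact: (res_inj_gen pP AP BP nA e).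
rewrite inE /g1 card_in_imset // -[m]/(m.+1.-1) -cP (cardsD1 [set x0] P) x0P eqxx andbT.
move/partTP: (pP) => [s0 cov uq]; apply/partTP; split.
- apply/imsetP => -[A]; rewrite in_setD1 => /andP [nA AP] /esym /eqP.
  by apply/negP; apply: res_ne0 pP AP nA.
- move=> i; case: (cov (ww i)) => A AP iA; exists (res A); last by rewrite memres.
  apply: imset_f; rewrite in_setD1 AP andbT; apply/eqP => e.
  by move: iA; rewrite e inE ww_neq.
- move=> A B i /imsetP [A' A'P ->] /imsetP [B' B'P ->]; rewrite !memres => iA iB.
  move: A'P B'P; rewrite !in_setD1 => /andP [_ A'P] /andP [_ B'P].
  by rewrite (uq A' B' (ww i)).
Qed.

Lemma g1f1 m Q : Q \in Sset n m -> g1 (f1 Q) = Q.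
Proof.
move=> _; rewrite /g1 /f1 setU1K ?x0notext // -imset_comp.
rewrite (eq_imset _ resext); exact: imset_id.
Qed.

Lemma f1g1 m P : P \in Sset n.+1 m.+1 :&: B1 -> f1 (g1 P) = P.
Proof.
rewrite in_setI /B1 [in X in _ && X]inE inE => /andP [/andP [pP /eqP cP] x0P].
rewrite /f1 /g1 -imset_comp (eq_in_imset (g := id)) ?imset_id ?setD1K //.
move=> A; rewrite in_setD1 => /andP [nA AP] /=.
rewrite extres; apply/setP => y; rewrite in_setD1.
case: eqP => // -> /=; apply/esym/negbTE; exact: partx0 pP AP x0P nA.
Qed.

Definition f2 (QB : {set {set 'I_n}} * {set 'I_n}) : {set {set 'I_n.+1}} :=
  (x0 |: ext QB.2) |: (ext @: (QB.1 :\ QB.2)).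
Definition g2 (P : {set {set 'I_n.+1}}) : {set {set 'I_n}} * {set 'I_n} :=
  (res @: P, res (pblock P x0)).
Definition D2 m := [set QB : {set {set 'I_n}} * {set 'I_n} |
   (QB.1 \in Sset n m.+1) && (QB.2 \in QB.1)].

Lemma x0ext2 B (Q : {set {set 'I_n}}) : x0 |: ext B \notin ext @: Q.
Proof.
apply/imsetP => -[A _ e]; have := x0ext A; rewrite -e.
by rewrite setU11.
Qed.

Lemma f2_ok m QB : QB \in D2 m -> f2 QB \in Sset n.+1 m.+1 :\: B1.
Proof.
case: QB => Q B; rewrite inE /= inE => /andP [/andP [/partTP [s0 cov uq] /eqP cQ] BQ].
rewrite in_setD /B1 [in X in ~~ X && _]inE /f2 /= [in X in _ && X]inE cardsU1 x0ext2.
rewrite card_imset; last exact: ext_inj.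
rewrite (cardsD1 B Q) BQ in cQ; rewrite -cQ /= eqxx andbT; apply/andP; split.
  rewrite in_setU1 negb_or; apply/andP; split.
    apply/eqP => /setP e.
    have /set0Pn [i iB] : B != set0 by apply: contraNneq s0 => <-.
    by move: (e (ww i)); rewrite in_setU1 memext iB orbT inE ww_neq.
  by apply: x0notext.
have key : forall A y, A \in Q -> y \in x0 |: ext B -> y \in ext A -> A = B.
  move=> A y AQ; rewrite in_setU1 => /orP [/eqP ->|yB]; first by rewrite (negbTE (x0ext _)).
  by case/imsetP: yB => i iB -> ; rewrite memext => iA; apply: (uq A B i).
apply/partTP; split.
- rewrite in_setU1 negb_or; apply/andP; split.
    by apply/eqP => /setP /(_ x0); rewrite !inE eqxx.
  apply/imsetP => -[A]; rewrite in_setD1 => /andP [_ AQ] /esym /ext0 A0.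
  by move: s0; rewrite -A0 AQ.
- move=> y; case: (caseI y) => [->|[i ->]].
    by exists (x0 |: ext B); rewrite !setU11.
  case: (cov i) => A AQ iA; case: (eqVneq A B) => [eAB|nAB].
    exists (x0 |: ext B); first by rewrite setU11.
    by rewrite in_setU1 memext -eAB iA orbT.
  exists (ext A); last by rewrite memext.
  by rewrite in_setU1 imset_f ?orbT // in_setD1 nAB.
- move=> X Y y; rewrite !in_setU1 => /orP [/eqP ->|/imsetP [A' A'Q ->]]
     /orP [/eqP ->|/imsetP [B' B'Q ->]] //.
  + move: B'Q; rewrite in_setD1 => /andP [nB B'Q] yX yB.
    by move: nB; rewrite (key B' y) ?eqxx.
  + move: A'Q; rewrite in_setD1 => /andP [nA A'Q] yA yX.
    by move: nA; rewrite (key A' y) ?eqxx.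
  + move: A'Q B'Q; rewrite !in_setD1 => /andP [_ A'Q] /andP [_ B'Q].
    move=> /imsetP [i iA ->]; rewrite memext => iB.
    by rewrite (uq A' B' i).
Qed.

Lemma g2_ok m P : P \in Sset n.+1 m.+1 :\: B1 -> g2 P \in D2 m.
Proof.
rewrite in_setD /B1 [in X in ~~ X && _]inE inE => /andP [nx0 /andP [pP /eqP cP]].
have inj : {in P &, injective res}.
  move=> A B AP BP e; apply: (res_inj_gen pP AP BP _ e).
  by apply: contraNneq nx0 => <-.
have covP : cover P = [set: 'I_n.+1] by case/and3P: pP => /eqP.
have B0P : pblock P x0 \in P by apply: pblock_mem; rewrite covP inE.
rewrite inE /g2 /= imset_f // andbT inE card_in_imset // cP eqxx andbT.
move/partTP: (pP) => [s0 cov uq]; apply/partTP; split.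
- apply/imsetP => -[A AP] /esym /eqP; apply/negP.
  apply: (res_ne0 pP AP); by apply: contraNneq nx0 => <-.
- move=> i; case: (cov (ww i)) => A AP iA; exists (res A); last by rewrite memres.
  exact: imset_f.
- move=> A B i /imsetP [A' A'P ->] /imsetP [B' B'P ->]; rewrite !memres => iA iB.
  by rewrite (uq A' B' (ww i)).
Qed.

Lemma g2f2 m QB : QB \in D2 m -> g2 (f2 QB) = QB.
Proof.
move=> QBD; have := f2_ok QBD; rewrite in_setD => /andP [_]; rewrite inE => /andP [pP _].
move: QBD; case: QB pP => Q B pP; rewrite inE /= => /andP [_ BQ].
rewrite /g2 /f2 /=; congr pair.
  rewrite imsetU1 -imset_comp (eq_imset _ resext) imset_id.
  have -> : res (x0 |: ext B) = B.
    by apply/setP => i; rewrite memres in_setU1 ww_neq memext.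
  exact: setD1K.
rewrite (def_pblock (B := x0 |: ext B)) ?setU11 //; first last.
  by case/and3P: pP.
by apply/setP => i; rewrite memres in_setU1 ww_neq memext.
Qed.

Lemma f2g2 m P : P \in Sset n.+1 m.+1 :\: B1 -> f2 (g2 P) = P.
Proof.
rewrite in_setD /B1 [in X in ~~ X && _]inE inE => /andP [nx0 /andP [pP /eqP cP]].
have inj : {in P &, injective res}.
  move=> A B AP BP e; apply: (res_inj_gen pP AP BP _ e).
  by apply: contraNneq nx0 => <-.
have covP : cover P = [set: 'I_n.+1] by case/and3P: pP => /eqP.
set B0 := pblock P x0.
have B0P : B0 \in P by apply: pblock_mem; rewrite covP inE.
have xB0 : x0 \in B0 by rewrite mem_pblock covP inE.
move/partTP: (pP) => [s0 cov uq].
rewrite /f2 /g2 /= extres setD1K //.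
have -> : (res @: P) :\ res B0 = res @: (P :\ B0).
  apply/setP => Y; rewrite in_setD1; apply/idP/idP.
    case/andP => nY /imsetP [A AP eY]; apply/imsetP; exists A => //.
    by rewrite in_setD1 AP andbT; apply: contraNneq nY => eA; rewrite eY eA.
  case/imsetP => A; rewrite in_setD1 => /andP [nA AP] ->.
  rewrite imset_f // andbT; apply: contra nA => /eqP e.
  by apply/eqP; apply: inj.
rewrite -imset_comp (eq_in_imset (g := id)) ?imset_id ?setD1K //.
move=> A; rewrite in_setD1 => /andP [nA AP] /=.
rewrite extres; apply/setP => y; rewrite in_setD1.
case: eqP => // -> /=; apply/esym/negbTE; apply/negP => xA.
by case/eqP: nA; apply: (uq A B0 x0).
Qed.

Lemma card_D2 m : #|D2 m| = m.+1 * #|Sset n m.+1|.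
Proof.
rewrite -sum1_card.
rewrite (eq_bigl (fun QB => (QB.1 \in Sset n m.+1) && (QB.2 \in QB.1))); last first.
  by move=> QB; rewrite inE.
rewrite -(pair_big_dep (fun Q => Q \in Sset n m.+1) (fun Q B => B \in Q) (fun _ _ => 1)) /=.
rewrite -sum1_card big_distrr /= mulnC; apply: eq_bigr => Q.
rewrite inE => /andP [_ /eqP cQ]; by rewrite sum1_card cQ mul1n.
Qed.

Lemma stirling_rec m :
  #|Sset n.+1 m.+1| = m.+1 * #|Sset n m.+1| + #|Sset n m|.
Proof.
rewrite -(cardsID B1 (Sset n.+1 m.+1)) addnC -card_D2.
congr addn.
  apply/esym; apply: (bij_card (f := f2) (g := g2)).
  - by move=> x; apply: f2_ok.
  - by move=> x; apply: g2_ok.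
  - by move=> x; apply: g2f2.
  - by move=> x; apply: f2g2.
apply/esym; apply: (bij_card (f := f1) (g := g1)).
- by move=> x; apply: f1_ok.
- by move=> x; apply: g1_ok.
- by move=> x; apply: g1f1.
- by move=> x; apply: f1g1.
Qed.
End Rec.

Lemma Sset0 m (P : {set {set 'I_0}}) : (P \in Sset 0 m) = (P == set0) && (m == 0).
Proof.
have all0 : forall A : {set 'I_0}, A = set0 by move=> A; apply/setP => -[].
rewrite inE; apply/idP/idP.
  case/andP => /partTP [s0 _ _] /eqP <-.
  have -> : P = set0.
    by apply/setP => A; rewrite inE (all0 A); apply/negbTE.
  by rewrite eqxx cards0.
case/andP => /eqP -> /eqP ->; rewrite cards0 eqxx andbT.
by apply/partTP; split; [rewrite inE | case | move=> A B x; rewrite inE].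
Qed.

Lemma stirling00 : #|Sset 0 0| = 1.
Proof.
rewrite -(cards1 (set0 : {set {set 'I_0}})); apply: eq_card => P.
by rewrite Sset0 inE andbT.
Qed.

Lemma stirling0S m : #|Sset 0 m.+1| = 0.
Proof. by apply: eq_card0 => P; rewrite Sset0 andbF. Qed.

Lemma stirlingS0 n : #|Sset n.+1 0| = 0.
Proof.
apply: eq_card0 => P; rewrite inE; apply/negP => /andP [/partTP [_ cov _] /eqP /cards0_eq P0].
by case: (cov ord0) => A; rewrite P0 inE.
Qed.
Import Order.TTheory GRing.Theory Num.Theory.
Local Open Scope ring_scope.
Lemma st_eq n m : stirling2 n m = #|Sset n m|. Proof. by []. Qed.

Section Alg.
Variable R : numFieldType.

Definition Tp (p : {poly R}) := ('X - 'X^2) * p^`().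
Fixpoint Pp n : {poly R} := if n is n'.+1 then Tp (Pp n') else 'X.

Definition sig n := \sum_(i < n) Pp i *+ 'C(n, i).

Lemma ident n : Pp n + 'X * sig n = 'X.
Proof.
elim: n => [|n IH]; first by rewrite /sig big_ord0 mulr0 addr0.
have H2 : (Pp n)^`() = 1 - sig n - 'X * (sig n)^`().
  have := congr1 deriv IH; rewrite derivD derivM derivX mul1r => E.
  rewrite -{1}E; ring.
have H1 : Pp n = 'X - 'X * sig n by rewrite -{1}IH; ring.
have H3 : sig n.+1 = sig n + Pp n + ('X - 'X^2) * (sig n)^`().
  rewrite /sig raddf_sum mulr_sumr big_ord_recl bin0 mulr1n.
  have -> : \sum_(i < n) Pp i *+ 'C(n, i) + Pp n = \sum_(i < n.+1) Pp i *+ 'C(n, i).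
    by rewrite big_ord_recr /= binn mulr1n.
  rewrite [in RHS]big_ord_recl bin0 mulr1n -!addrA; congr (_ + _).
  rewrite addrC -big_split /=; apply: eq_bigr => i _.
  rewrite /bump add0n leq0n add1n binS mulrnDr derivMn mulrnAr addrC /Tp //.
rewrite H3 /=. rewrite /Tp H2 H1; ring.
Qed.

Lemma coefTp (p : {poly R}) i : (Tp p)`_i =
  if i is j.+1 then p`_j.+1 *+ j.+1 - (if j is j'.+1 then p`_j'.+1 *+ j'.+1 else 0) else 0.
Proof.
rewrite /Tp mulrBl coefB coefXM coefXnM !coef_deriv.
by case: i => [|[|j]]; rewrite /= ?subr0 // !subSS subn0.
Qed.

Lemma st_rec n m : stirling2 n.+1 m.+1 = (m.+1 * stirling2 n m.+1 + stirling2 n m)%N.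
Proof. exact: stirling_rec. Qed.
Lemma st00 : stirling2 0 0 = 1%N. Proof. exact: stirling00. Qed.
Lemma st0S m : stirling2 0 m.+1 = 0%N. Proof. exact: stirling0S. Qed.
Lemma stS0 n : stirling2 n.+1 0 = 0%N. Proof. exact: stirlingS0. Qed.

Lemma coefPp n i : (Pp n)`_i =
  if i is j.+1 then (-1)^+j * (j`!)%:R * (stirling2 n.+1 j.+1)%:R else 0.
Proof.
elim: n i => [|n IH] i.
  rewrite /= coefX; case: i => [|j] //=.
  rewrite st_rec st0S muln0 add0n.
  case: j => [|j]; first by rewrite st00 /= expr0 !mul1r.
  by rewrite st0S mulr0.
rewrite /= coefTp; case: i => [|j] //.
rewrite (st_rec n.+1 j).
case: j => [|j]; rewrite !IH.
  by rewrite stS0 addn0 subr0 expr0 !mul1r mulr1n mul1n.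
rewrite natrD natrM !factS !natrM exprS; ring.
Qed.
End Alg.

Lemma st_big n m : (n < m)%N -> stirling2 n m = 0%N.
Proof.
elim: n m => [|n IH] [|m] //; first by rewrite st0S.
rewrite ltnS => lt; rewrite st_rec !IH ?muln0 //; exact: ltnW.
Qed.

Section Main.
Variables (R : numFieldType) (t : R).

Lemma fact_neq0 n : (n`!%:R : R) != 0.
Proof. by rewrite pnatr_eq0 -lt0n fact_gt0. Qed.

Lemma Qt0 : Qt t 0 = 1.
Proof.
by rewrite /Qt /fps_add /fps_scale /fps_exp /fps_opp /fps_one /= invr1 subrr mulr0 addr0.
Qed.

Lemma QtS j : Qt t j.+1 = t / (j.+1)`!%:R.
Proof. by rewrite /Qt /fps_add /fps_scale /fps_exp /fps_opp /fps_one /= oppr0 addr0 add0r. Qed.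

Lemma dQt n : fps_deriv (Qt t) n = t / n`!%:R.
Proof.
rewrite /fps_deriv QtS factS natrM.
have h1 : (n.+1%:R : R) != 0 by rewrite pnatr_eq0.
have h2 := fact_neq0 n.
field. by rewrite h2 addrC natr1 h1.
Qed.

Lemma evalPp n : (Pp R n).[t] =
  \sum_(j < n.+1) (-1)^+j * (j`!)%:R * (stirling2 n.+1 j.+1)%:R * t ^+ j.+1.
Proof.
rewrite (horner_coef_wide (n := n.+2)); last first.
  apply/leq_sizeP => j; rewrite coefPp; case: j => [|j] // lt.
  by rewrite st_big ?mulr0.
by rewrite big_ord_recl coefPp mul0r add0r; apply: eq_bigr => i _; rewrite coefPp.
Qed.

Lemma hval (h : fps R) (hq : fps_quotient (fps_deriv (Qt t)) (Qt t) h) n :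
  h n = (Pp R n).[t] / n`!%:R.
Proof.
elim/ltn_ind: n => n IH.
have := hq n; rewrite /fps_mul big_ord_recl Qt0 mul1r subn0 dQt.
have I := congr1 (horner^~ t) (ident R n).
rewrite /= hornerD hornerM hornerX horner_sum in I.
rewrite (eq_bigr (fun i : 'I_n => (Pp R i).[t] *+ 'C(n,i))) in I; last by move=> i _; rewrite hornerMn.
rewrite (eq_bigr (fun i : 'I_n => t / (i.+1)`!%:R * ((Pp R (n - i.+1)).[t] / (n - i.+1)`!%:R))); last first.
  move=> i _; rewrite lift0 QtS IH //.
  by move: (ltn_ord i) => ?; lia.
have -> : \sum_(i < n) t / (i.+1)`!%:R * ((Pp R (n - i.+1)).[t] / (n - i.+1)`!%:R)
   = t * (\sum_(i < n) (Pp R i).[t] *+ 'C(n, i)) / n`!%:R.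
  rewrite mulr_sumr mulr_suml (reindex_inj rev_ord_inj).
  apply: eq_bigr => i _.
  have -> : (rev_ord i : nat) = (n - i.+1)%N by [].
  have e1 : (n - (n - i.+1).+1)%N = i by move: (ltn_ord i) => ?; lia.
  have e2 : (n - i)%N = (n - i.+1).+1 by move: (ltn_ord i) => ?; lia.
  rewrite e1; set k := (n - i.+1)%N.
  have hk : (i <= n)%N by apply: ltnW.
  have B := bin_fact hk; rewrite e2 in B.
  have C0 : ('C(n, i)%:R : R) != 0 by rewrite pnatr_eq0 -lt0n bin_gt0.
  have B' : ('C(n,i)%:R : R) * (i`!%:R * (k.+1)`!%:R) = n`!%:R by rewrite -!natrM B.
  rewrite -B' -[(Pp R i).[t] *+ _]mulr_natr.
  move: (fact_neq0 i) (fact_neq0 k.+1) C0.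
  move: (i`!%:R : R) ((k.+1)`!%:R : R) ('C(n,i)%:R : R) => a b c ha hb hc.
  field; by rewrite ha hb hc.
move=> E.
have nf := fact_neq0 n.
have -> : h n = t / n`!%:R - t * (\sum_(i < n) (Pp R i).[t] *+ 'C(n, i)) / n`!%:R.
  by rewrite -E addrK.
have eP : (Pp R n).[t] = t - t * (\sum_(i < n) (Pp R i).[t] *+ 'C(n, i)) by rewrite -{2}I addrK.
by rewrite eP mulrBl.
Qed.
End Main.

Unset Implicit Arguments.
Theorem lemma4p3 (R : numFieldType) (t : R) (k : nat) (hk : (1 <= k)%N)
    (h : fps R) (hq : fps_quotient (fps_deriv (Qt t)) (Qt t) h) :
  h k.-1 =
    t * \sum_(i < k)
          ((stirling2 k (k - i))%:R / ('C(k.-1, i) * i`!)%:R) * (- t) ^+ (k.-1 - i).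
Proof.
case: k hk => [//|n] _ /=.
rewrite (hval hq) evalPp mulr_suml mulr_sumr (reindex_inj rev_ord_inj).
apply: eq_bigr => j _.
have -> : (rev_ord j : nat) = (n - j)%N by rewrite /= subSS.
have jn : (j <= n)%N by rewrite -ltnS.
have e1 : (n.+1 - j)%N = (n - j).+1 by lia.
rewrite e1 natrM [(- t) ^+ _]exprNn exprS.
have B := bin_fact jn.
have B' : ('C(n,j)%:R : R) * (j`!%:R * (n - j)`!%:R) = n`!%:R by rewrite -!natrM B.
have C0 : ('C(n, j)%:R : R) != 0 by rewrite pnatr_eq0 -lt0n bin_gt0.
rewrite -B'.
move: (fact_neq0 R j) (fact_neq0 R (n - j)) C0.
move: (j`!%:R : R) ((n - j)`!%:R : R) ('C(n,j)%:R : R) => a b c ha hb hc.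
move: ((-1) ^+ (n - j) : R) (t ^+ (n - j)) ((stirling2 n.+1 (n - j).+1)%:R : R) => u v w.
field; by rewrite ha hb hc.
Qed.
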